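(* Consider any instance $\mathcal{I}$ of the online volunteer notification problem (defined in the context) whose inter-activity time distribution $g$ has minimum discrete hazard rate $q$. Then the sparse notification (SN) policy is $\frac{1}{2-q}\left(1-\frac{1}{e}\right)$-competitive, i.e., for every such instance, $\mathbf{POL}_{\mathcal{I}} \ge \frac{1}{2-q}\left(1-\frac{1}{e}\right)\mathbf{LP}_{\mathcal{I}}$, where $\mathbf{POL}_{\mathcal{I}}$ is the expected number of tasks completed by the SN policy.
   Context: Online volunteer notification problem. An instance $\mathcal{I}$ consists of volunteers $[V]=\{1,\dots,V\}$, task types $[S]$, a horizon $T\in\mathbb{N}$, arrival probabilities $\lambda_{s,t}\ge 0$ ($s\in[S],t\in[T]$) with $\sum_{s=1}^S\lambda_{s,t}\le 1$, match probabilities $p_{v,s}\in[0,1]$, and a probability mass function $g$ on the positive integers (inter-activity time distribution) with CDF $G(\tau)=\sum_{i=1}^{\tau}g(i)$, $G(0)=0$. In each period $t$ at most one task arrives: of type $s$ with probability $\lambda_{s,t}$, and none with probability $\lambda_{0,t}:=1-\sum_{s}\lambda_{s,t}$, independently across periods. Each volunteer is at each time active or inactive; all are initially active. When a task arrives, the platform immediately and irrevocably notifies a subset of volunteers. Each notified active volunteer $v$ responds positively to a type-$s$ task independently with probability $p_{v,s}$; the task is completed iff at least one notified active volunteer responds. An active volunteer who is notified at time $t$ becomes inactive (regardless of her response) and becomes active again at time $t+Z$, where $Z$ is drawn independently with $\Pr(Z=\tau)=g(\tau)$; inactive volunteers ignore notifications and are unaffected by them. The platform knows $\lambda,p,g$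 but does not observe volunteers' states; an online policy decides whom to notify using only information available up to the current period. $\mathbf{POL}_{\mathcal{I}}$ denotes the expected number of completed tasks. Minimum discrete hazard rate (MDHR): $q=\min_{\tau\in\mathbb{N}}\frac{g(\tau)}{1-G(\tau-1)}$, with $\frac00:=1$. Benchmark: $\mathcal{P}$ is the set of $\mathbf{x}\in\mathbb{R}^{V\times S\times T}$ with $0\le x_{v,s,t}\le 1$ for all $v,s,t$ and $\sum_{\tau=1}^t\sum_{s=1}^S\lambda_{s,\tau}x_{v,s,\tau}(1-G(t-\tau))\le 1$ for all $v,t$. $\mathbf{LP}_{\mathcal{I}}=\max_{\mathbf{x}\in\mathcal{P}}\sum_{t=1}^T\sum_{s=1}^S\lambda_{s,t}\min\{\sum_{v=1}^V x_{v,s,t}p_{v,s},1\}$. A policy is $c$-competitive if $\mathbf{POL}_{\mathcal{I}}\ge c\,\mathbf{LP}_{\mathcal{I}}$ for every instance. Ex ante solution: $f(\mathbf{x})=\sum_{t=1}^T\sum_{s=1}^S\lambda_{s,t}\big(1-\prod_{v=1}^V(1-x_{v,s,t}p_{v,s})\big)$. Let $\mathbf{x}^*_{LP}$ be an optimal solution of $\mathbf{LP}_{\mathcal{I}}$; $\mathbf{x}^*_{AA}$ the output of the procedure (for some $m\in\mathbb{N}$): $\mathbf{x}^0=\mathbf{0}$, for $i=1,\dots,m$: $\mathbf{y}^i\in\arg\max_{\mathbf{x}\in\mathcal{P}}\langle \mathbf{x},\nabla f(\mathbf{x}^{i-1})\rangle$, $\mathbf{x}^i=\mathbf{x}^{i-1}+\mathbf{y}^i/m$,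 output $\mathbf{x}^m$; and $\mathbf{x}^*_{SQ}$ obtained sequentially for $v=1,\dots,V$: $(x^{SQ}_{v,s,t})_{s,t}$ is an optimal solution of $\max\sum_{t,s}\lambda_{s,t}\big(\prod_{u<v}(1-p_{u,s}x^{SQ}_{u,s,t})\big)p_{v,s}x_{v,s,t}$ subject to $0\le x_{v,s,t}\le1$ and $\sum_{\tau=1}^t\sum_s\lambda_{s,\tau}x_{v,s,\tau}(1-G(t-\tau))\le1$ for all $t$. Then $\mathbf{x}^*\in\arg\max_{\mathbf{x}\in\{\mathbf{x}^*_{LP},\mathbf{x}^*_{AA},\mathbf{x}^*_{SQ}\}}f(\mathbf{x})$. SN policy: Offline, for $v=1,\dots,V$ in order: set $r_{v,s,t}=p_{v,s}\prod_{u=1}^{v-1}(1-\tilde x_{u,s,t}p_{u,s})$, $J_{v,T+1}=0$; for $t=T$ down to $1$: for $s\in[S]$, $\tilde x_{v,s,t}=x^*_{v,s,t}\,\mathbb{I}\{r_{v,s,t}+\sum_{\tau=t+1}^T g(\tau-t)J_{v,\tau}\ge J_{v,t+1}\}$ (with $\tilde x_{v,0,t}=r_{v,0,t}=0$), and $J_{v,t}=\sum_{s=0}^S\lambda_{s,t}\big((1-\tilde x_{v,s,t})J_{v,t+1}+\tilde x_{v,s,t}(r_{v,s,t}+\sum_{\tau=t+1}^T g(\tau-t)J_{v,\tau})\big)$. Online: when a task of type $s$ arrives at time $t$, notify each volunteer $v$ independently with probability $\tilde x_{v,s,t}$. *)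

(* Defs.v *)
From HB Require Import structures.
From mathcomp Require Import all_boot all_order all_algebra.
From mathcomp Require Import all_classical all_reals all_analysis.
Set Implicit Arguments. Unset Strict Implicit. Unset Printing Implicit Defensive.
Import Order.TTheory GRing.Theory Num.Theory.
Local Open Scope ring_scope.

(* Conventions:
   - volunteers are indexed by naturals v in {0,..,V-1} (processed in this
     order, i.e. volunteer v+1 of the paper is v here);
   - task types are s : 'I_S (the "no task" type 0 of the paper is handled
     separately through lam0);
   - periods are naturals t in {1,..,T}, as in the paper;
   - a point of R^{V x S x T} is a function  nat -> 'I_S -> nat -> R,
     of which only the entries with v < V and 1 <= t <= T matter. *)

Section VolunteerNotification.
Variable R : realType.
Variables (V S T : nat).
Variable lam : 'I_S -> nat -> R.
Variable p : nat -> 'I_S -> R.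
Variable g : nat -> R.             (* pmf on positive integers *)

Definition vec := nat -> 'I_S -> nat -> R.

Definition Gc (k : nat) : R := \sum_(1 <= i < k.+1) g i.

Definition lam0 (t : nat) : R := 1 - \sum_(s < S) lam s t.

(* minimum discrete hazard rate, with 0/0 := 1 *)
Definition hazard (tau : nat) : R :=
  if 1 - Gc tau.-1 == 0 then 1 else g tau / (1 - Gc tau.-1).

Definition IsMDHR (q : R) : Prop :=
  (exists tau, (0 < tau)%N /\ hazard tau = q) /\
  (forall tau, (0 < tau)%N -> q <= hazard tau).

Definition feasv (y : 'I_S -> nat -> R) : Prop :=
  (forall s t, (1 <= t <= T)%N -> 0 <= y s t <= 1) /\
  (forall t, (1 <= t <= T)%N ->
     \sum_(1 <= tau < t.+1) \sum_(s < S) lam s tau * y s tau * (1 - Gc (t - tau)) <= 1).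

Definition inP (x : vec) : Prop := forall v, (v < V)%N -> feasv (x v).

Definition LPobj (x : vec) : R :=
  \sum_(1 <= t < T.+1) \sum_(s < S)
     lam s t * Num.min (\sum_(v < V) x v s t * p v s) 1.

Definition IsLPopt (x : vec) : Prop :=
  inP x /\ forall y, inP y -> LPobj y <= LPobj x.

Definition fobj (x : vec) : R :=
  \sum_(1 <= t < T.+1) \sum_(s < S)
     lam s t * (1 - \prod_(v < V) (1 - x v s t * p v s)).

Definition upd (x : vec) (v : nat) (s : 'I_S) (t : nat) (r : R) : vec :=
  fun v' s' t' => if [&& v' == v, s' == s & t' == t] then r else x v' s' t'.

Definition partial_f (x : vec) (v : nat) (s : 'I_S) (t : nat) : R :=
  derive1 (fun r => fobj (upd x v s t r)) (x v s t).

Definition inner_grad (y x : vec) : R :=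
  \sum_(v < V) \sum_(s < S) \sum_(1 <= t < T.+1) y v s t * partial_f x v s t.

(* x is an output of the (continuous greedy) procedure with parameter m *)
Definition IsAA (m : nat) (x : vec) : Prop :=
  exists (xs ys : nat -> vec),
    xs 0%N = (fun _ _ _ => 0) /\
    (forall i, (1 <= i <= m)%N ->
       [/\ inP (ys i),
           (forall y, inP y -> inner_grad y (xs i.-1) <= inner_grad (ys i) (xs i.-1)) &
           xs i = (fun v s t => xs i.-1 v s t + ys i v s t / m%:R)]) /\
    x = xs m.

Definition SQobj (x : vec) (v : nat) (y : 'I_S -> nat -> R) : R :=
  \sum_(1 <= t < T.+1) \sum_(s < S)
     lam s t * (\prod_(u < v) (1 - p u s * x u s t)) * p v s * y s t.

Definition IsSQ (x : vec) : Prop :=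
  forall v, (v < V)%N ->
    feasv (x v) /\ (forall y, feasv y -> SQobj x v y <= SQobj x v (x v)).

Definition IsXstar (x xLP xAA xSQ : vec) : Prop :=
  [/\ x = xLP \/ x = xAA \/ x = xSQ,
      fobj xLP <= fobj x, fobj xAA <= fobj x & fobj xSQ <= fobj x].

Definition cont (J : nat -> R) (t : nat) : R :=
  \sum_(t.+1 <= tau < T.+1) g (tau - t) * J tau.

Definition sel (xv r : 'I_S -> nat -> R) (J : nat -> R) (s : 'I_S) (t : nat) : R :=
  xv s t * (if J t.+1 <= r s t + cont J t then 1 else 0).

(* Jf xv r n : the values J_tau for tau > T - n (tau <= T+1), J_{T+1} = 0 *)
Fixpoint Jf (xv r : 'I_S -> nat -> R) (n : nat) : nat -> R :=
  match n with
  | 0%N => fun _ => 0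
  | n'.+1 =>
      let J := Jf xv r n' in
      let t := (T - n')%N in
      fun tau =>
        if tau == t then
          \sum_(s < S) lam s t *
             ((1 - sel xv r J s t) * J t.+1 + sel xv r J s t * (r s t + cont J t))
          + lam0 t * J t.+1
        else J tau
  end.

Definition xtil_of (xv r : 'I_S -> nat -> R) (s : 'I_S) (t : nat) : R :=
  sel xv r (Jf xv r T) s t.

Section SNx.
Variable xs : vec.

Fixpoint pre (v : nat) : 'I_S -> nat -> R :=
  match v with
  | 0%N => fun _ _ => 1
  | v'.+1 => fun s t =>
      pre v' s t *
      (1 - xtil_of (xs v') (fun s' t' => p v' s' * pre v' s' t') s t * p v' s)
  end.

Definition xtil (v : nat) (s : 'I_S) (t : nat) : R :=
  xtil_of (xs v) (fun s' t' => p v s' * pre v s' t') s t.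

(* State a : 'I_V -> nat, volunteer v is active at time t iff a v <= t.
   When a notified active volunteer's inter-activity time Z is drawn at t,
   the outcome is encoded by k : 'I_T.+1 :  k = 0 means Z > T - t (she does
   not come back within the horizon), k >= 1 means Z = k. *)
Definition zweight (act : bool) (t : nat) (k : 'I_T.+1) : R :=
  if act then
    (if (val k == 0)%N then 1 - Gc (T - t)
     else if (val k <= T - t)%N then g k else 0)
  else (if (val k == 0)%N then 1 else 0).

Definition newstate (a : 'I_V -> nat) (N : {set 'I_V}) (t : nat)
   (z : {ffun 'I_V -> 'I_T.+1}) : 'I_V -> nat :=
  fun v => if (v \in N) && (a v <= t)%N then
             (if (val (z v) == 0)%N then T.+1 else (t + z v)%N)
           else a v.

(* W n a : expected number of tasks completed in periods T-n+1,...,T,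
   starting at period T-n+1 in state a *)
Fixpoint W (n : nat) (a : 'I_V -> nat) : R :=
  match n with
  | 0%N => 0
  | n'.+1 =>
      let t := (T - n')%N in
      \sum_(s < S) lam s t *
        \sum_(N : {set 'I_V})
          (\prod_(v in N) xtil v s t) * (\prod_(v in ~: N) (1 - xtil v s t)) *
          ((1 - \prod_(v in N | (a v <= t)%N) (1 - p v s)) +
           \sum_(z : {ffun 'I_V -> 'I_T.+1})
              (\prod_(v : 'I_V) zweight ((v \in N) && (a v <= t)%N) t (z v)) *
              W n' (newstate a N t z))
      + lam0 t * W n' a
  end.

(* POL: all volunteers initially active *)
Definition POL_SN : R := W T (fun _ => 0%N).

End SNx.

End VolunteerNotification.

(* Main.v *)
Require Import Defs.
From HB Require Import structures.
From mathcomp Require Import all_boot all_order all_algebra.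
From mathcomp Require Import all_classical all_reals all_analysis.
From mathcomp Require Import ring lra.
Import Order.TTheory GRing.Theory Num.Theory numFieldNormedType.Exports.
Local Open Scope ring_scope.

Lemma exch1 (R : realType) (a b : nat) (F : nat -> nat -> R) :
  \sum_(a <= t < b) \sum_(t.+1 <= u < b) F t u =
  \sum_(a <= u < b) \sum_(a <= t < u) F t u.
Proof.
elim: b => [|b IH]; first by rewrite !big_geq.
case: (leqP a b) => hab; last first.
  by rewrite !big_geq.
rewrite big_nat_recr //= [in RHS]big_nat_recr //= -IH.
rewrite [X in _ + X]big_geq // addr0 -big_split /=.
apply: eq_big_nat => t /andP[_ htb].
by rewrite big_nat_recr.
Qed.

Lemma exch2 (R : realType) (a b : nat) (F : nat -> nat -> R) :
  \sum_(a <= u < b) \sum_(a <= t < u.+1) F t u =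
  \sum_(a <= t < b) \sum_(t <= u < b) F t u.
Proof.
elim: b => [|b IH]; first by rewrite !big_geq.
case: (leqP a b) => hab; last first.
  by rewrite !big_geq.
rewrite big_nat_recr //= IH [in RHS]big_nat_recr //=.
rewrite [X in _ = _ + X]big_nat1.
rewrite [X in _ + X = _]big_nat_recr //= addrA; congr (_ + _).
rewrite -big_split /=.
apply: eq_big_nat => t /andP[_ htb].
by rewrite big_nat_recr //= ltnW.
Qed.

Lemma core_ineq (R : realType) (T : nat) (q : R) (J A y C G : nat -> R) :
  q <= 1 ->
  J T.+1 = 0 ->
  (forall t, (1 <= t <= T)%N -> 0 <= J t - J t.+1) ->
  (forall t, (1 <= t <= T)%N -> A t - y t * (J t.+1 - C t) <= J t - J t.+1) ->
  (forall t, (1 <= t <= T)%N ->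
     J t.+1 - C t = \sum_(t.+1 <= u < T.+1) (J u - J u.+1) * (1 - G (u - t)%N)) ->
  (forall u, (1 <= u <= T)%N -> \sum_(1 <= t < u) y t * (1 - G (u - t)%N) <= 1 - q) ->
  \sum_(1 <= t < T.+1) A t <= (2 - q) * J 1%N.
Proof.
move=> hq hJT hD hA hC hy.
have tel : \sum_(1 <= t < T.+1) (J t - J t.+1) = J 1%N.
  rewrite (telescope_sumr_eq (fun k => - J k)) // ?hJT ?oppr0 ?opprK ?add0r //.
  by move=> k _; rewrite opprK addrC.
apply: (@le_trans _ _ (\sum_(1 <= t < T.+1) ((J t - J t.+1) +
     \sum_(t.+1 <= u < T.+1) y t * ((J u - J u.+1) * (1 - G (u - t)%N))))).
  apply: ler_sum_nat => t ht.
  have ht' : (1 <= t <= T)%N by rewrite -ltnS.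
  rewrite -mulr_sumr -hC // -lerBlDr; exact: hA.
rewrite big_split /= tel exch1.
have -> : (2 - q) * J 1%N = J 1%N + (1 - q) * J 1%N.
  by rewrite mulrBl mulrBl mul1r; rewrite [2 * _]mulrDl mul1r; ring.
rewrite lerD2l -tel mulr_sumr.
apply: ler_sum_nat => u hu.
have hu' : (1 <= u <= T)%N by rewrite -ltnS.
have -> : \sum_(1 <= i < u) y i * ((J u - J u.+1) * (1 - G (u - i)%N)) =
          (J u - J u.+1) * \sum_(1 <= i < u) y i * (1 - G (u - i)%N).
  rewrite mulr_sumr; apply: eq_bigr => i _; ring.
rewrite [X in _ <= X]mulrC; apply: ler_wpM2l; [exact: hD | exact: hy].
Qed.


Lemma Gc_shift (R : realType) (g : nat -> R) (t u : nat) : (t <= u)%N ->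
  Gc g (u - t) = \sum_(t.+1 <= tau < u.+1) g (tau - t)%N.
Proof.
move=> htu; rewrite /Gc; have -> : t.+1 = (1 + t)%N by rewrite add1n.
rewrite big_addn.
have -> : (u.+1 - t = (u - t).+1)%N by rewrite subSn.
by apply: eq_bigr => i _; rewrite addnK.
Qed.

Lemma cont_ident (R : realType) (g J : nat -> R) (T t : nat) : (t <= T)%N ->
  J T.+1 = 0 ->
  J t.+1 - \sum_(t.+1 <= tau < T.+1) g (tau - t)%N * J tau =
  \sum_(t.+1 <= u < T.+1) (J u - J u.+1) * (1 - Gc g (u - t)%N).
Proof.
move=> htT hJ.
have tel : forall a, (a <= T.+1)%N -> \sum_(a <= u < T.+1) (J u - J u.+1) = J a.
  move=> a ha.
  rewrite (telescope_sumr_eq (fun k => - J k)) // ?hJ ?oppr0 ?opprK ?add0r //.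
  by move=> k _; rewrite opprK addrC.
have -> : \sum_(t.+1 <= u < T.+1) (J u - J u.+1) * (1 - Gc g (u - t)%N) =
   \sum_(t.+1 <= u < T.+1) (J u - J u.+1) -
   \sum_(t.+1 <= u < T.+1) \sum_(t.+1 <= tau < u.+1) (J u - J u.+1) * g (tau - t)%N.
  rewrite -sumrB; apply: eq_big_nat => u /andP[hu _].
  rewrite Gc_shift ?(ltnW hu) // -mulr_sumr; ring.
rewrite tel // exch2; congr (_ - _).
apply: eq_big_nat => tau /andP[htau htauT].
rewrite -mulr_suml tel 1?mulrC //; exact: ltnW.
Qed.


Section JfS.
Variables (R : realType) (S T : nat) (lam : 'I_S -> nat -> R) (g : nat -> R).
Variables (xv r : 'I_S -> nat -> R).

Lemma cont_ext {J1 J2 : nat -> R} {t : nat} :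
  (forall tau, (t < tau)%N -> J1 tau = J2 tau) -> cont T g J1 t = cont T g J2 t.
Proof.
move=> h; apply: eq_big_nat => tau /andP[h1 _]; by rewrite h.
Qed.

Lemma sel_ext {J1 J2 : nat -> R} s {t : nat} :
  (forall tau, (t < tau)%N -> J1 tau = J2 tau) ->
  sel T g xv r J1 s t = sel T g xv r J2 s t.
Proof.
move=> h; rewrite /sel (cont_ext h) h //.
Qed.

Lemma Jf_big n tau : (T < tau)%N -> Jf T lam g xv r n tau = 0.
Proof.
move=> h; elim: n => [|n IH] //=.
case: ifP => [/eqP e|_] //.
by move: h; rewrite e ltnNge leq_subr.
Qed.

Lemma Jf_stab n k tau : (n + k <= T)%N -> (T - n < tau)%N ->
  Jf T lam g xv r (n + k) tau = Jf T lam g xv r n tau.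
Proof.
move=> hk ht; elim: k hk => [|k IH] hk; first by rewrite addn0.
rewrite addnS /=.
case: ifP => [/eqP e|_]; last by apply: IH; apply: ltnW; rewrite -addnS.
exfalso; move: ht; rewrite e; apply/negP; rewrite -leqNgt.
apply: leq_sub2l; exact: leq_addr.
Qed.

Lemma Jf_eq t : (1 <= t <= T)%N ->
  let J := Jf T lam g xv r T in
  J t = \sum_(s < S) lam s t *
             ((1 - sel T g xv r J s t) * J t.+1 + sel T g xv r J s t * (r s t + cont T g J t))
          + lam0 lam t * J t.+1.
Proof.
move=> /andP[h1 h2] J.
set n := (T - t)%N.
have hn : (n < T)%N by rewrite /n ltn_subrL h1 (leq_trans _ h2).
have htn : t = (T - n)%N by rewrite /n subKn.
have agree : forall tau, (t < tau)%N -> J tau = Jf T lam g xv r n tau.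
  move=> tau htau; rewrite /J.
  have := @Jf_stab n (T - n) tau; rewrite subnKC; last exact: ltnW.
  rewrite -htn; apply => //.
have -> : J t = Jf T lam g xv r n.+1 t.
  rewrite /J.
  have := @Jf_stab n.+1 (T - n.+1) t; rewrite subnKC //; apply => //.
  by rewrite htn subnS prednK ?subn_gt0 // ltnS.
rewrite /= -htn eqxx.
rewrite (agree t.+1 (ltnSn t)).
rewrite (cont_ext (J1 := J) (J2 := Jf T lam g xv r n) agree).
congr (_ + _); apply: eq_bigr => s _.
by rewrite (sel_ext (J1 := J) (J2 := Jf T lam g xv r n) s agree).
Qed.
End JfS.


Section Core.
Variables (R : realType) (S T : nat) (lam : 'I_S -> nat -> R) (g : nat -> R) (q : R).
Variables (xv r : 'I_S -> nat -> R).
Hypothesis hlam : forall s t, (1 <= t <= T)%N -> 0 <= lam s t.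
Hypothesis hq : q <= 1.
Hypothesis hH : forall k, 1 - Gc g k.+1 <= (1 - q) * (1 - Gc g k).
Hypothesis hfeas : feasv T lam g xv.

Lemma core_vol :
  \sum_(1 <= t < T.+1) \sum_(s < S) lam s t * xv s t * r s t
   <= (2 - q) * Jf T lam g xv r T 1%N.
Proof.
set J := Jf T lam g xv r T.
have hx : forall s t, (1 <= t <= T)%N -> 0 <= xv s t by move=> s t /(hfeas.1 s) /andP[].
have hD : forall t, (1 <= t <= T)%N -> J t - J t.+1 =
    \sum_(s < S) lam s t * sel T g xv r J s t * (r s t + cont T g J t - J t.+1).
  move=> t ht; rewrite {1}/J (@Jf_eq _ _ _ _ _ _ _ _ ht) -/J /lam0.
  rewrite mulrBl mul1r mulr_suml.
  set a := \sum_(s < S) _; set b := \sum_(s < S) _.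
  set c := \sum_(s < S) _.
  suff -> : a = c + b by ring.
  rewrite /a /b /c -big_split; apply: eq_bigr => s _ /=; ring.
apply: (@core_ineq R T q J (fun t => \sum_(s < S) lam s t * xv s t * r s t)
   (fun t => \sum_(s < S) lam s t * xv s t) (cont T g J) (Gc g)) => //.
- by rewrite /J Jf_big.
- move=> t ht; rewrite hD //; apply: sumr_ge0 => s _.
  rewrite /sel; case: ifP => hc.
    rewrite mulr1 mulr_ge0 ?mulr_ge0 ?hlam ?hx // subr_ge0 //.
  by rewrite mulr0 mulr0 mul0r.
- move=> t ht; rewrite hD // mulr_suml -sumrB; apply: ler_sum => s _.
  rewrite /sel; case: ifP => hc.
    rewrite mulr1 le_eqVlt; apply/orP; left; apply/eqP; ring.
  rewrite mulr0 mulr0 mul0r.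
  have h0 : r s t + cont T g J t - J t.+1 <= 0.
    by rewrite subr_le0; apply/ltW; rewrite ltNge hc.
  have ha : 0 <= lam s t * xv s t by rewrite mulr_ge0 ?hlam ?hx.
  move: h0 ha; set z := r s t + _ - _; set a := lam s t * xv s t => h0 ha.
  have -> : a * r s t - a * (J t.+1 - cont T g J t) = a * z by rewrite /z; ring.
  exact: mulr_ge0_le0.
- move=> t /andP[_ ht]; rewrite /cont cont_ident //.
  by rewrite /J Jf_big.
- move=> u /andP[hu1 huT].
  case: (ltnP 1 u) => hu; last first.
    by rewrite big_geq // subr_ge0.
  apply: (@le_trans _ _ ((1 - q) * \sum_(1 <= tau < u.-1.+1)
        \sum_(s < S) lam s tau * xv s tau * (1 - Gc g (u.-1 - tau)))).
    rewrite prednK ?(ltnW hu) // mulr_sumr; apply: ler_sum_nat => t /andP[ht1 htu].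
    rewrite mulr_suml mulr_sumr; apply: ler_sum => s _.
    have e : (u - t = (u.-1 - t).+1)%N.
      have u0 : (0 < u)%N := ltnW hu.
      rewrite -subSn; first by rewrite prednK.
      by rewrite -ltnS prednK.
    rewrite e.
    have hxt : 0 <= lam s t * xv s t.
      apply: mulr_ge0; [apply: hlam | apply: hx];
      by rewrite ht1 (leq_trans (ltnW htu)).
    by rewrite [X in _ <= X]mulrCA; apply: ler_wpM2l => //; apply: hH.
  rewrite -[X in _ <= X]mulr1; apply: ler_wpM2l; first by rewrite subr_ge0.
  apply: hfeas.2.
  by rewrite -ltnS prednK ?(ltnW hu) // hu (leq_trans _ huT) // leq_pred.
Qed.
End Core.


Lemma prod_split_set (R : realType) (I : finType) (N : {set I}) (F G : I -> R) :
  \prod_(v in N) F v * \prod_(v in ~: N) G v =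
  \prod_v (if v \in N then F v else G v).
Proof.
rewrite [RHS](bigID (fun v => v \in N)) /=; congr (_ * _).
  by apply: eq_bigr => v ->.
rewrite [LHS](eq_bigl (fun v => ~~ (v \in N))); last by move=> v; rewrite !inE.
by apply: eq_bigr => v /negbTE ->.
Qed.

Lemma PM (R : realType) (I : finType) (f : I -> bool -> R) :
  \sum_(N : {set I}) \prod_v f v (v \in N) = \prod_v (f v true + f v false).
Proof.
have -> : \prod_v (f v true + f v false) = \prod_v \sum_(b : bool) f v b.
  by apply: eq_bigr => v _; rewrite big_bool.
rewrite bigA_distr_bigA /=.
rewrite (reindex (fun F : {ffun I -> bool} => [set v | F v])) /=.
  by apply: eq_bigr => F _; apply: eq_bigr => v _; rewrite inE.
exists (fun N : {set I} => [ffun v => v \in N]) => F _.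
  by apply/ffunP => v; rewrite ffunE inE.
by apply/setP => v; rewrite inE ffunE.
Qed.

Lemma ZM (R : realType) (I J : finType) (w : I -> J -> R) (phi : J -> R) (v0 : I) :
  (forall u, \sum_k w u k = 1) ->
  \sum_(z : {ffun I -> J}) (\prod_u w u (z u)) * phi (z v0) = \sum_k w v0 k * phi k.
Proof.
move=> h1.
pose w' u k := if u == v0 then w u k * phi k else w u k.
have e1 : \prod_u \sum_k w' u k = \sum_k w v0 k * phi k.
  rewrite (bigD1 v0) //= [X in _ * X]big1 ?mulr1.
    by apply: eq_bigr => k _; rewrite /w' eqxx.
  move=> u /negbTE hu; rewrite -(h1 u); apply: eq_bigr => k _; by rewrite /w' hu.
rewrite -e1 bigA_distr_bigA /=; apply: eq_bigr => z _.
rewrite (bigD1 v0) //= [in RHS](bigD1 v0) //= /w' eqxx.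
rewrite [X in _ = _ * X](eq_bigr (fun u => w u (z u))); last first.
  by move=> u /negbTE ->.
ring.
Qed.

Lemma tele (R : realType) (n : nat) (c y : nat -> R) :
  (forall i, (i < n)%N -> 0 <= y i <= 1) -> (forall i, (i < n)%N -> 0 <= c i <= 1) ->
  \sum_(i < n) c i * y i * \prod_(j < i) (1 - y j) <= 1 - \prod_(i < n) (1 - c i * y i).
Proof.
elim: n => [|n IH] hy hc; first by rewrite !big_ord0 subrr.
have hpr : \prod_(j < n) (1 - y j) <= \prod_(j < n) (1 - c j * y j).
  apply: ler_prod => j _.
  have := hy j (ltn_trans (ltn_ord j) (ltnSn n)); have := hc j (ltn_trans (ltn_ord j) (ltnSn n)).
  move=> /andP[c0 c1] /andP[y0 y1].
  apply/andP; split; first lra.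
  nra.
have IH' := IH (fun i hi => hy i (ltn_trans hi (ltnSn n))) (fun i hi => hc i (ltn_trans hi (ltnSn n))).
clear IH; rename IH' into IH.
rewrite big_ord_recr big_ord_recr /=.
have := hpr; have := hy n (ltnSn n); have := hc n (ltnSn n).
move=> /andP[c0 c1] /andP[y0 y1] hp.
set P1 := \prod_(j < n) (1 - y j) in hp *; set P2 := \prod_(i < n) (1 - c i * y i) in hp IH *.
set Sm := \sum_(i < n) _ in IH *.
have : 0 <= c n * y n by apply: mulr_ge0.
nra.
Qed.


Section Expect.
Variables (R : realType) (I : finType) (x : I -> R).
Let wN (N : {set I}) := \prod_(v in N) x v * \prod_(v in ~: N) (1 - x v).

Lemma wN_ge0 N : (forall v, 0 <= x v <= 1) -> 0 <= wN N.
Proof.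
move=> h; rewrite /wN mulr_ge0 // prodr_ge0 // => v _; have := h v; lra.
Qed.

Lemma E1 : \sum_N wN N = 1.
Proof.
rewrite (eq_bigr (fun N : {set I} => \prod_v (fun v b => if b then x v else 1 - x v) v (v \in N))).
  by rewrite (@PM _ _ (fun v b => if b then x v else 1 - x v)) big1 // => v _; ring.
by move=> N _; rewrite /wN prod_split_set.
Qed.

Lemma E2 v0 (A B : R) :
  \sum_N wN N * (if v0 \in N then A else B) = x v0 * A + (1 - x v0) * B.
Proof.
pose f v (b : bool) := if b then x v * (if v == v0 then A else 1)
                       else (1 - x v) * (if v == v0 then B else 1).
rewrite (eq_bigr (fun N : {set I} => \prod_v f v (v \in N))).
  rewrite PM (bigD1 v0) //= big1 ?mulr1 /f ?eqxx //.
  by move=> v /negbTE ->; ring.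
move=> N _; rewrite /wN prod_split_set.
have -> : (if v0 \in N then A else B) =
   \prod_v (if v == v0 then (if v \in N then A else B) else 1).
  by rewrite -big_mkcond big_pred1_eq.
rewrite -big_split /=; apply: eq_bigr => v _; rewrite /f.
by case: (v \in N); case: (v == v0); ring.
Qed.

Lemma E3 (P : pred I) (p : I -> R) :
  \sum_N wN N * \prod_(v in N | P v) (1 - p v) =
  \prod_v (1 - x v * (if P v then p v else 0)).
Proof.
pose f v (b : bool) := if b then x v * (if P v then 1 - p v else 1) else 1 - x v.
rewrite (eq_bigr (fun N : {set I} => \prod_v f v (v \in N))).
  rewrite PM; apply: eq_bigr => v _; rewrite /f; case: (P v); ring.
move=> N _; rewrite /wN prod_split_set [X in _ * X]big_mkcond -big_split /=.
apply: eq_bigr => v _; rewrite /f; case: (v \in N); case: (P v) => /=; ring.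
Qed.
End Expect.

Section Zw.
Variables (R : realType) (T : nat) (g : nat -> R).

Lemma sum_shift (F : nat -> R) t : (t <= T)%N ->
  \sum_(t.+1 <= tau < T.+1) F tau = \sum_(0 <= i < T - t) F (i + t.+1)%N.
Proof.
move=> ht; have := @big_addn R 0 +%R 0 T.+1 t.+1 xpredT F.
by rewrite add0n subSS.
Qed.

Lemma zsum_aux (F : nat -> R) t : (t <= T)%N ->
  \sum_(k < T.+1) (if (val k == 0)%N then 0 else if (val k <= T - t)%N then F (val k) else 0)
  = \sum_(1 <= i < (T - t).+1) F i.
Proof.
move=> ht; rewrite big_ord_recl /= add0r.
rewrite (eq_bigr (fun i : 'I_T => if (i < T - t)%N then F i.+1 else 0)); last first.
  by move=> i _.
rewrite -(big_mkord xpredT (fun i => if (i < T - t)%N then F i.+1 else 0)).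
rewrite (big_cat_nat (n := (T - t)%N)) //= ?leq_subr // [X in _ + X]big1_seq ?addr0.
  rewrite big_add1 /= [in RHS]big_nat_cond [in LHS]big_nat_cond.
  by apply: eq_bigr => i /andP[/andP[_ ->] _].
move=> i /andP[_]; rewrite mem_index_iota => /andP[h _].
by rewrite ltnNge h.
Qed.

Lemma zsum1 (c : bool) t : (t <= T)%N ->
  \sum_(k < T.+1) zweight g c t k = 1.
Proof.
move=> ht; rewrite /zweight; case: c.
  rewrite big_ord_recl /= (eq_bigr (fun k : 'I_T => (if (val (lift ord0 k) == 0)%N then 0 else if (val (lift ord0 k) <= T - t)%N then g (val (lift ord0 k)) else 0))); last by move=> k _.
  have := zsum_aux g t ht; rewrite big_ord_recl /= add0r => ->.
  rewrite /Gc; ring.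
rewrite big_ord_recl /= big1 ?addr0 //.
Qed.

Lemma zval (J : nat -> R) (av : nat) t : (t <= T)%N -> (forall tau, (T < tau)%N -> J tau = 0) ->
  forall c : bool,
  \sum_(k < T.+1) zweight g c t k *
      J (maxn (if c then (if (val k == 0)%N then T.+1 else (t + val k)%N) else av) t.+1)
  = if c then cont T g J t else J (maxn av t.+1).
Proof.
move=> ht hJ [|]; last first.
  rewrite big_ord_recl /zweight /= mul1r big1 ?addr0 // => k _; by rewrite mul0r.
rewrite big_ord_recl /zweight /= hJ ?mulr0 ?add0r; last by rewrite leq_max ltnSn.
rewrite (eq_bigr (fun k : 'I_T => (if (k < T - t)%N then g k.+1 * J (t + k.+1)%N else 0))); last first.
  move=> k _; rewrite /bump /= add1n.
  case: ifP => _; last by rewrite mul0r.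
  by rewrite (maxn_idPl _) // addnS ltnS leq_addr.
rewrite -(big_mkord xpredT (fun i => if (i < T - t)%N then g i.+1 * J (t + i.+1)%N else 0)).
rewrite (big_cat_nat (n := (T - t)%N)) //= ?leq_subr // [X in _ + X]big1_seq ?addr0; last first.
  move=> i /andP[_]; rewrite mem_index_iota => /andP[h _].
  by rewrite ltnNge h.
rewrite /cont sum_shift // big_nat_cond [in RHS]big_nat_cond.
apply: eq_bigr => i /andP[/andP[_ ->] _].
have -> : (i + t.+1 - t = i.+1)%N by rewrite addnS -addSn addnK.
by rewrite !addnS addnC.
Qed.
End Zw.


Section WB.
Variables (R : realType) (V S T : nat) (lam : 'I_S -> nat -> R) (p : nat -> 'I_S -> R).
Variables (g : nat -> R) (xs : vec R S).
Hypothesis hlam : forall s t, (1 <= t <= T)%N -> 0 <= lam s t.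
Hypothesis hsum : forall t, (1 <= t <= T)%N -> \sum_(s < S) lam s t <= 1.
Hypothesis hp : forall v s, (v < V)%N -> 0 <= p v s <= 1.
Hypothesis hx : forall v s t, (v < V)%N -> (1 <= t <= T)%N -> 0 <= xs v s t <= 1.
Hypothesis hg : forall i, (0 < i)%N -> 0 <= g i.
Hypothesis hG : forall k, Gc g k <= 1.

Definition rr v := fun s t => p v s * pre T lam p g xs v s t.
Definition JJ v := Jf T lam g (xs v) (rr v) T.
Definition xt := xtil T lam p g xs.

Lemma xt_sel v s t : xt v s t = sel T g (xs v) (rr v) (JJ v) s t.
Proof. by []. Qed.

Lemma xt_b v s t : (v < V)%N -> (1 <= t <= T)%N -> 0 <= xt v s t <= 1.
Proof.
move=> hv ht; rewrite xt_sel /sel; case: ifP => _; rewrite ?mulr1 ?mulr0 ?lexx ?ler01 //.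
exact: hx.
Qed.

Lemma xt_le v s t : (v < V)%N -> (1 <= t <= T)%N -> xt v s t <= xs v s t.
Proof.
move=> hv ht; rewrite xt_sel /sel; case: ifP => _; rewrite ?mulr1 ?mulr0 //.
by have := hx v s t hv ht => /andP[].
Qed.

Lemma pre_prod v s t : pre T lam p g xs v s t = \prod_(j < v) (1 - xt j s t * p j s).
Proof.
elim: v => [|v IH]; first by rewrite big_ord0.
by rewrite big_ord_recr /= -IH.
Qed.

Lemma zw_ge0 c t (k : 'I_T.+1) : (t <= T)%N -> 0 <= zweight g c t k.
Proof.
move=> ht; rewrite /zweight; case: c.
  case: ifP => [_|/negbT hk]; first by rewrite subr_ge0.
  by case: ifP => // _; apply: hg; rewrite lt0n.
by case: ifP.
Qed.

Lemma Wbound n : (n <= T)%N -> forall a : 'I_V -> nat,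
  \sum_(v : 'I_V) JJ v (maxn (a v) (T - n).+1) <= W T lam p g xs n a.
Proof.
elim: n => [|n IH] hn a.
  rewrite big1 /=; first by [].
  move=> v _. rewrite /JJ. rewrite Jf_big //.
  by rewrite subn0 leq_max ltnSn orbT.
have hnT : (n < T)%N by [].
have IH' := IH (ltnW hnT); clear IH.
set t := (T - n)%N in IH' *.
have ht1 : (1 <= t)%N by rewrite /t subn_gt0.
have htT : (t <= T)%N by rewrite /t leq_subr.
have ht : (1 <= t <= T)%N by rewrite ht1 htT.
have -> : (T - n.+1).+1 = t by rewrite subnS prednK.
rewrite /=. rewrite -/t.
have hJ0 : forall v tau, (T < tau)%N -> JJ v tau = 0.
  by move=> v tau h; rewrite /JJ Jf_big.
pose B s := \sum_(v < V) ((if (a v <= t)%N then 1 else 0) * (xt v s t * rr v s t) +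
   (xt v s t * (if (a v <= t)%N then cont T g (JJ v) t else JJ v (maxn (a v) t.+1)) +
    (1 - xt v s t) * JJ v (maxn (a v) t.+1))).
have stepB : \sum_(v < V) JJ v (maxn (a v) t) =
   \sum_(s < S) lam s t * B s + lam0 lam t * \sum_(v < V) JJ v (maxn (a v) t.+1).
  rewrite /B (eq_bigr (fun s => \sum_(v < V) lam s t * ((if (a v <= t)%N then 1 else 0) * (xt v s t * rr v s t) +
   (xt v s t * (if (a v <= t)%N then cont T g (JJ v) t else JJ v (maxn (a v) t.+1)) +
    (1 - xt v s t) * JJ v (maxn (a v) t.+1))))); last by move=> s _; rewrite mulr_sumr.
  rewrite exchange_big /= mulr_sumr -big_split /=.
  apply: eq_bigr => v _.
  case: (leqP (a v) t) => hav.
    rewrite (maxn_idPr (leqW hav)).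
    have := @Jf_eq R S T lam g (xs v) (rr v) t ht; rewrite /= -/(JJ v) => ->.
    congr (_ + _); apply: eq_bigr => s _; rewrite xt_sel; ring.
  have hav' : (a v <= t)%N = false by rewrite leqNgt hav.
  rewrite (maxn_idPl hav) /lam0.
  rewrite (eq_bigr (fun s => lam s t * JJ v (a v))); last by move=> s _; ring.
  rewrite -mulr_suml; ring.
have l0 : 0 <= lam0 lam t by rewrite /lam0 subr_ge0 hsum.
rewrite stepB; apply: lerD; last first.
  by apply: ler_wpM2l => //; exact: IH'.
apply: ler_sum => s _; apply: ler_wpM2l; first exact: hlam.
have wge0 : forall N : {set 'I_V}, 0 <= \prod_(v in N) xt v s t * \prod_(v in ~: N) (1 - xt v s t).
  move=> N; rewrite mulr_ge0 // prodr_ge0 // => v _; have := @xt_b v s t (ltn_ord v) ht; lra.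
pose Y := \sum_(N : {set 'I_V}) \prod_(v in N) xt v s t * \prod_(v in ~: N) (1 - xt v s t) *
   ((1 - \prod_(v in N | (a v <= t)%N) (1 - p v s)) +
    \sum_(v < V) (if (v \in N) && (a v <= t)%N then cont T g (JJ v) t else JJ v (maxn (a v) t.+1))).
apply: (@le_trans _ _ Y).
  rewrite /Y.
  under eq_bigr => N _ do rewrite mulrDr mulrBr mulr1 mulr_sumr.
  rewrite big_split sumrB /= (@E1 R _ (fun v : 'I_V => xt v s t)).
  rewrite (@E3 R _ (fun v : 'I_V => xt v s t) (fun v : 'I_V => (a v <= t)%N) (fun v : 'I_V => p v s)).
  rewrite exchange_big /= /B big_split /=; apply: lerD.
    pose c' i := oapp (fun v : 'I_V => if (a v <= t)%N then (1:R) else 0) 0 (insub i).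
    have T1 := @tele R V c' (fun i => xt i s t * p i s).
    apply: le_trans (le_trans _ (T1 _ _)) _.
    - rewrite le_eqVlt; apply/orP; left; apply/eqP; apply: eq_bigr => v _.
      by rewrite /c' valK /= /rr pre_prod !mulrA.
    - move=> i hi; have := @xt_b i s t hi ht; have := hp i s hi; nra.
    - by move=> i hi; rewrite /c'; case: (insub i) => [v|] /=; [case: ifP => _; lra | lra].
    - rewrite le_eqVlt; apply/orP; left; apply/eqP; congr (_ - _); apply: eq_bigr => v _.
      by rewrite /c' valK /=; case: ifP => _; ring.
  rewrite le_eqVlt; apply/orP; left; apply/eqP; apply: eq_bigr => v _.
  rewrite (eq_bigr (fun N : {set 'I_V} => \prod_(v in N) xt v s t * \prod_(v in ~: N) (1 - xt v s t) *
     (if v \in N then (if (a v <= t)%N then cont T g (JJ v) t else JJ v (maxn (a v) t.+1)) else JJ v (maxn (a v) t.+1)))).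
    by rewrite (@E2 R _ (fun v : 'I_V => xt v s t)).
  by move=> N _; case: (v \in N).
apply: ler_sum => N _; apply: ler_wpM2l; first exact: wge0.
rewrite lerD2l.
have eqZ : \sum_(z : {ffun 'I_V -> 'I_T.+1}) (\prod_(v < V) zweight g ((v \in N) && (a v <= t)%N) t (z v)) *
     \sum_(v < V) JJ v (maxn (newstate a N t z v) t.+1) =
   \sum_(v < V) (if (v \in N) && (a v <= t)%N then cont T g (JJ v) t else JJ v (maxn (a v) t.+1)).
  rewrite (eq_bigr (fun z : {ffun 'I_V -> 'I_T.+1} => \sum_(v < V) (\prod_(v < V) zweight g ((v \in N) && (a v <= t)%N) t (z v)) * JJ v (maxn (newstate a N t z v) t.+1))); last by move=> z _; rewrite mulr_sumr.
  rewrite exchange_big /=; apply: eq_bigr => v _.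
  rewrite -(@zval R T g (JJ v) (a v) t htT (hJ0 v) ((v \in N) && (a v <= t)%N)).
  pose w (u : 'I_V) (k : 'I_T.+1) := zweight g ((u \in N) && (a u <= t)%N) t k.
  pose phi (k : 'I_T.+1) := JJ v (maxn (if (v \in N) && (a v <= t)%N then (if (val k == 0)%N then T.+1 else (t + val k)%N) else a v) t.+1).
  have := @ZM R 'I_V _ w phi v (fun u => @zsum1 R T g _ t htT).
  rewrite /w /phi => <-.
  by apply: eq_bigr => z _; rewrite /newstate.
rewrite -eqZ; apply: ler_sum => z _; apply: ler_wpM2l.
  by apply: prodr_ge0 => v _; apply: zw_ge0.
exact: IH'.
Qed.
End WB.

Local Open Scope classical_set_scope.
Local Open Scope ring_scope.

Lemma ebound (R : realType) (Z : R) : 0 <= Z ->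
  (1 - (expR 1)^-1) * Num.min Z 1 <= 1 - expR (- Z).
Proof.
move=> hZ.
have e1 : (expR 1)^-1 = expR (-1) :> R by rewrite expRN.
case: (lerP Z 1) => hZ1.
  have := @convex_expR R (Itv01 hZ hZ1) (-1) 0.
  rewrite !convRE /= expR0 e1 /unstable.onem.
  have -> : Z * -1 = - Z by ring.
  rewrite mulr0 addr0 mulr1; nra.
have : expR (- Z) <= expR (-1) by rewrite ler_expR lerN2 ltW.
rewrite e1; lra.
Qed.

Lemma prod_exp (R : realType) (I : finType) (z : I -> R) :
  (forall i, 0 <= z i <= 1) -> \prod_i (1 - z i) <= expR (- \sum_i z i).
Proof.
move=> h; rewrite -sumrN expR_sum; apply: ler_prod => i _.
have := h i => /andP[h0 h1]; apply/andP; split; first lra.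
by have := expR_ge1Dx (- z i); lra.
Qed.

Lemma tele_eq (R : realType) (n : nat) (y : nat -> R) :
  1 - \prod_(i < n) (1 - y i) = \sum_(i < n) y i * \prod_(j < i) (1 - y j).
Proof.
elim: n => [|n IH]; first by rewrite !big_ord0 subrr.
rewrite big_ord_recr big_ord_recr /= -IH; ring.
Qed.

Section Haz.
Variables (R : realType) (g : nat -> R) (q : R).
Hypothesis hg : forall i, (0 < i)%N -> 0 <= g i.
Hypothesis hcv : (Gc g) @ \oo --> (1 : R).
Hypothesis hM : IsMDHR g q.

Lemma GcS k : Gc g k.+1 = Gc g k + g k.+1.
Proof. by rewrite /Gc big_nat_recr. Qed.

Lemma Gc_le1 k : Gc g k <= 1.
Proof.
have hom : {homo Gc g : n m / (n <= m)%N >-> n <= m}.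
  move=> n m; elim: m => [|m IH]; first by rewrite leqn0 => /eqP ->.
  rewrite leq_eqVlt => /orP[/eqP -> //|]; rewrite ltnS => /IH h.
  by rewrite GcS; apply: (le_trans h); rewrite lerDl hg.
have := @nondecreasing_cvgn_le R (Gc g) hom (cvgP _ hcv) k.
by rewrite (cvg_lim _ hcv).
Qed.

Lemma hazard_bound k : 1 - Gc g k.+1 <= (1 - q) * (1 - Gc g k).
Proof.
have := hM.2 k.+1 (ltn0Sn k); rewrite /hazard /= GcS.
have := hg k.+1 (ltn0Sn k); have := Gc_le1 k.
case: eqP => [e|ne] h1 h2 hq.
  by rewrite e mulr0; lra.
have hD : 0 < 1 - Gc g k by rewrite lt_neqAle eq_sym; apply/andP; split; [apply/eqP|]; lra.
rewrite ler_pdivlMr // in hq; nra.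
Qed.

Lemma q_le1 : q <= 1.
Proof.
have := hM.2 1%N (ltn0Sn 0); rewrite /hazard /=.
have -> : Gc g 0 = 0 by rewrite /Gc big_geq.
rewrite subr0 oner_eq0 divr1.
have := Gc_le1 1; rewrite GcS.
have -> : Gc g 0 = 0 by rewrite /Gc big_geq.
lra.
Qed.
End Haz.


Lemma AA_feas (R : realType) (V S T : nat) (lam : 'I_S -> nat -> R) (p : nat -> 'I_S -> R)
  (g : nat -> R) (m : nat) (x : vec R S) :
  (0 < m)%N -> IsAA V T lam p g m x -> inP V T lam g x.
Proof.
move=> hm [xs [ys [h0 [hstep ->]]]].
have hm0 : (m%:R : R) != 0 by rewrite pnatr_eq0 -lt0n.
pose cons (y : 'I_S -> nat -> R) t :=
  \sum_(1 <= tau < t.+1) \sum_(s < S) lam s tau * y s tau * (1 - Gc g (t - tau)).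
have inv : forall i, (i <= m)%N -> forall v, (v < V)%N ->
  (forall s t, (1 <= t <= T)%N -> 0 <= xs i v s t <= i%:R / m%:R) /\
  (forall t, (1 <= t <= T)%N -> cons (xs i v) t <= i%:R / m%:R).
  elim=> [|i IH] hi v hv.
    rewrite h0. rewrite mul0r. split.
      by move=> s t _; rewrite lexx.
    move=> t _; rewrite /cons big1 // => tau _; rewrite big1 // => s _; by rewrite !mulr0 mul0r.
  have [IH1 IH2] := IH (ltnW hi) v hv.
  have [fy _ e] := hstep i.+1 hi.
  have [fy1' fy2'] := fy v hv.
  have eS : (i.+1%:R / m%:R : R) = i%:R / m%:R + 1 / m%:R by rewrite -mulrDl -natr1.
  have hmp : (0 : R) < m%:R by rewrite ltr0n.
  rewrite e /=; split.
    move=> s t ht; have := IH1 s t ht; have := fy1' s t ht.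
    move=> /andP[a0 a1] /andP[b0 b1]; rewrite eS; apply/andP; split.
      by rewrite addr_ge0 // divr_ge0 // ltW.
    by rewrite lerD // ler_pM2r ?invr_gt0.
  move=> t ht.
  have -> : cons (fun s t => xs i v s t + ys i.+1 v s t / m%:R) t =
            cons (xs i v) t + cons (ys i.+1 v) t / m%:R.
    rewrite /cons mulr_suml -big_split; apply: eq_bigr => tau _.
    rewrite mulr_suml -big_split; apply: eq_bigr => s _ /=; ring.
  rewrite eS; apply: lerD; first exact: IH2.
  by rewrite ler_pM2r ?invr_gt0 //; apply: fy2'.
move=> v hv; have [h1 h2] := inv m (leqnn m) v hv.
by rewrite divff in h1 h2.
Qed.


Theorem theorem1 (R : realType) (V S T : nat)
  (lam : 'I_S -> nat -> R) (p : nat -> 'I_S -> R) (g : nat -> R) (q : R)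
  (m : nat) (xLP xAA xSQ xstar : vec R S) :
  (forall s t, (1 <= t <= T)%N -> 0 <= lam s t) ->
  (forall t, (1 <= t <= T)%N -> \sum_(s < S) lam s t <= 1) ->
  (forall v s, (v < V)%N -> 0 <= p v s <= 1) ->
  (forall i, (0 < i)%N -> 0 <= g i) ->
  (Gc g) @ \oo --> (1 : R) ->
  IsMDHR g q ->
  IsLPopt V T lam p g xLP ->
  (0 < m)%N ->
  IsAA V T lam p g m xAA ->
  IsSQ V T lam p g xSQ ->
  IsXstar V T lam p xstar xLP xAA xSQ ->
  (2 - q)^-1 * (1 - (expR 1)^-1) * LPobj V T lam p xLP
    <= POL_SN V T lam p g xstar.
Proof.
move=> hlam hsum hp hg hcv hM hLP hm hAA hSQ hX.
have hq := @q_le1 R g q hg hcv hM.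
have hG := @Gc_le1 R g hg hcv.
have hH := @hazard_bound R g q hg hcv hM.
have fLP := hLP.1.
have fAA := @AA_feas _ _ _ _ _ _ _ _ _ hm hAA.
have fSQ : inP V T lam g xSQ := fun v hv => (hSQ v hv).1.
have fX : inP V T lam g xstar.
  by case: hX => [[->|[->|->]] _ _ _].
have hx : forall v s t, (v < V)%N -> (1 <= t <= T)%N -> 0 <= xstar v s t <= 1.
  by move=> v s t hv ht; exact: (fX v hv).1 s t ht.
have q2 : 0 < 2 - q by lra.
have stE : (1 - (expR 1)^-1) * LPobj V T lam p xLP <= fobj V T lam p xLP.
  rewrite /LPobj /fobj mulr_sumr; apply: ler_sum_nat => t ht.
  have ht' : (1 <= t <= T)%N by rewrite -ltnS.
  rewrite mulr_sumr; apply: ler_sum => s _.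
  rewrite mulrCA; apply: ler_wpM2l; first exact: hlam.
  have hz : forall v : 'I_V, 0 <= xLP v s t * p v s <= 1.
    move=> v; have := (fLP v (ltn_ord v)).1 s t ht'; have := hp v s (ltn_ord v); nra.
  apply: le_trans (@ebound R _ _) _; first by apply: sumr_ge0 => v _; have := hz v; lra.
  rewrite lerD2l lerN2; exact: prod_exp.
have stF : fobj V T lam p xLP <= fobj V T lam p xstar by case: hX.
have stG : fobj V T lam p xstar <= \sum_(v < V) \sum_(1 <= t < T.+1) \sum_(s < S)
      lam s t * xstar v s t * rr R S T lam p g xstar v s t.
  rewrite /fobj [X in _ <= X]exchange_big /=; apply: ler_sum_nat => t ht.
  have ht' : (1 <= t <= T)%N by rewrite -ltnS.
  rewrite [X in _ <= X]exchange_big /=; apply: ler_sum => s _.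
  rewrite (@tele_eq R V (fun i => xstar i s t * p i s)) mulr_sumr; apply: ler_sum => v _.
  rewrite /rr pre_prod -!mulrA; apply: ler_wpM2l; first exact: hlam.
  rewrite !mulrA; apply: ler_wpM2l.
    have := hx v s t (ltn_ord v) ht'; have := hp v s (ltn_ord v); nra.
  apply: ler_prod => j _.
  have hj : (j < V)%N by apply: ltn_trans (ltn_ord j) (ltn_ord v).
  have := hx j s t hj ht'; have := hp j s hj.
  have := @xt_le R V S T lam p g xstar hx j s t hj ht'; have := @xt_b R V S T lam p g xstar hx j s t hj ht'.
  set a := xt _ _ _ _ _ _ _ _ _ _; nra.
have stH : forall v, (v < V)%N -> \sum_(1 <= t < T.+1) \sum_(s < S)
      lam s t * xstar v s t * rr R S T lam p g xstar v s t <= (2 - q) * JJ R S T lam p g xstar v 1%N.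
  by move=> v hv; rewrite /JJ; apply: core_vol => //; exact: fX.
have stI := @Wbound R V S T lam p g xstar hlam hsum hp hx hg hG T (leqnn T) (fun _ => 0%N).
rewrite subnn /= in stI.
have stGH : fobj V T lam p xstar <= (2 - q) * \sum_(v < V) JJ R S T lam p g xstar v 1%N.
  apply: (le_trans stG); rewrite mulr_sumr; apply: ler_sum => v _; exact: stH v (ltn_ord v).
apply: le_trans stI.
rewrite -mulrA; apply: le_trans (ler_wpM2l _ (le_trans (le_trans stE stF) stGH)) _.
  by rewrite invr_ge0 ltW.
by rewrite mulrA mulVf ?mul1r // gt_eqF.
Qed.
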